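(* Let $b>0$ and let $F,x_0,x_\infty,\mathbb{S}_2$ be as in the context. For any $(x,y)\in\mathbb{S}_2$ there exists a unique solution $z=z(x,y)$ of $y-z=F(x-\alpha z)$. Moreover $z(x,y)\in\big(\frac{x-x_0}{\alpha},\frac{x-x_\infty}{\alpha}\wedge y\big]$, $z(x,F(x))=0$ for every $x\in(x_\infty,x_0)$, and $z(x,y)=\frac{x-x_0}{\alpha}$ for every $(x,y)\in\mathbb{R}\times(0,\infty)$ with $x\ge x_0$ and $y=\frac{x-x_0}{\alpha}$.
   Context: Constants: $a\in\mathbb{R}$, $b>0$, $\sigma>0$, $\rho>0$, $c>0$, $\alpha>0$. $\psi(x)=e^{\frac{(bx-a)^2}{2\sigma^2 b}}D_{-\rho/b}\big(-\frac{bx-a}{\sigma b}\sqrt{2b}\big)$ with $D_\beta(x)=\frac{e^{-x^2/4}}{\Gamma(-\beta)}\int_0^\infty t^{-\beta-1}e^{-t^2/2-xt}dt$ ($\beta<0$); $\psi$ is the positive strictly increasing fundamental solution of $\frac12\sigma^2u''+(a-bx)u'-\rho u=0$. $x_0$ (resp. $x_\infty$) is the unique solution on $(c,\infty)$ of $(x-c)\psi'(x)-\psi(x)=0$ (resp. $(x-c)\psi''(x)-\psi'(x)=0$); $c<x_\infty<x_0$. For $x\in(x_\infty,x_0]$, $F(x)=\int_x^{x_0}\Theta(z)dz$ with $\Theta(z)=\frac{[\psi'''(z)((z-c)\psi'(z)-\psi(z))-\psi''(z)((z-c)\psi''(z)-\psi'(z))]\psi(z)}{-\alpha[\psi''(z)\psi(z)-\psi'(z)^2][(z-c)\psi''(z)-\psi'(z)]}$;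 $F$ is a strictly decreasing continuous bijection of $(x_\infty,x_0]$ onto $[0,\infty)$ with $F(x_0)=0$, and $F^{-1}$ denotes its inverse. $\mathbb{S}_2=\{(x,y)\in\mathbb{R}\times(0,\infty):x\ge F^{-1}(y),\ y>(x-x_0)/\alpha\}$. *)

(* Defs.v *)
From Stdlib Require Import Reals Lra ClassicalEpsilon.
From Coquelicot Require Import Coquelicot.
Open Scope R_scope.

Definition Gamma (s : R) : R :=
  RInt_gen (fun t => Rpower t (s - 1) * exp (- t)) (at_right 0) (Rbar_locally p_infty).

(* Parabolic cylinder function, for beta < 0:
   D_beta(x) = e^{-x^2/4}/Gamma(-beta) * int_0^oo t^(-beta-1) e^(-t^2/2 - x t) dt *)
Definition Dpc (beta x : R) : R :=
  exp (- x ^ 2 / 4) / Gamma (- beta) *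
  RInt_gen (fun t => Rpower t (- beta - 1) * exp (- t ^ 2 / 2 - x * t))
           (at_right 0) (Rbar_locally p_infty).

Definition psi (a b sigma rho : R) (x : R) : R :=
  exp ((b * x - a) ^ 2 / (2 * sigma ^ 2 * b)) *
  Dpc (- rho / b) (- (b * x - a) / (sigma * b) * sqrt (2 * b)).

Definition dpsi (a b sigma rho : R) (k : nat) (x : R) : R :=
  Derive_n (psi a b sigma rho) k x.

Definition Theta (a b sigma rho c alpha : R) (z : R) : R :=
  let p0 := dpsi a b sigma rho 0 z in
  let p1 := dpsi a b sigma rho 1 z in
  let p2 := dpsi a b sigma rho 2 z in
  let p3 := dpsi a b sigma rho 3 z in
  ((p3 * ((z - c) * p1 - p0) - p2 * ((z - c) * p2 - p1)) * p0) /
  (- alpha * (p2 * p0 - p1 ^ 2) * ((z - c) * p2 - p1)).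

(* F(x) = int_x^{x0} Theta(z) dz  (meaningful for x in (x_inf, x0]) *)
Definition Ffun (a b sigma rho c alpha x0 : R) (x : R) : R :=
  RInt (Theta a b sigma rho c alpha) x x0.

Definition Finv (a b sigma rho c alpha xinf x0 : R) (y : R) : R :=
  epsilon (inhabits 0)
    (fun u => xinf < u <= x0 /\ Ffun a b sigma rho c alpha x0 u = y).

Definition inS2 (a b sigma rho c alpha xinf x0 : R) (x y : R) : Prop :=
  0 < y /\ Finv a b sigma rho c alpha xinf x0 y <= x /\ y > (x - x0) / alpha.

Definition solves (a b sigma rho c alpha xinf x0 : R) (x y z : R) : Prop :=
  xinf < x - alpha * z <= x0 /\
  y - z = Ffun a b sigma rho c alpha x0 (x - alpha * z).

(* Main.v *)
Require Import Defs.
From Stdlib Require Import Reals.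
From Coquelicot Require Import Coquelicot.
From Stdlib Require Import Lra Psatz ClassicalEpsilon.
Open Scope R_scope.
Require Import Defs.

Lemma clamp_lip (l h u v : R) : l <= h ->
  Rabs (Rmax l (Rmin v h) - Rmax l (Rmin u h)) <= Rabs (v - u).
Proof.
  intros Hlh. unfold Rmax, Rmin.
  repeat (destruct Rle_dec); split_Rabs; lra.
Qed.

Lemma clamp_cont (F : R -> R) (l h lo : R) (Hlh : l <= h) (Hlo : lo < l)
  (HF : forall u, lo < u <= h -> filterlim F (within (fun v => lo < v <= h) (locally u)) (locally (F u))) :
  forall u, continuity_pt (fun v => F (Rmax l (Rmin v h))) u.
Proof.
  intros u. apply continuity_pt_filterlim.
  set (cl := fun v => Rmax l (Rmin v h)).
  assert (Dcl : forall v, lo < cl v <= h).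
  { intros v; unfold cl, Rmax, Rmin; repeat destruct Rle_dec; lra. }
  apply (filterlim_comp _ _ _ cl F _ (within (fun v => lo < v <= h) (locally (cl u)))).
  - intros P [eps Heps]. exists eps. intros v Hv. apply Heps.
    + unfold ball in *; simpl in *; unfold AbsRing_ball in *; simpl in *.
      unfold abs, minus, plus, opp in *; simpl in *.
      eapply Rle_lt_trans; [apply clamp_lip; exact Hlh|exact Hv].
    + apply Dcl.
  - apply HF. apply Dcl.
Qed.

Lemma exists_root (F : R -> R) (xinf x0 u0 x y alpha : R) (Hal : 0 < alpha)
  (Hu0 : xinf < u0 <= x0)
  (HF : forall u, xinf < u <= x0 -> filterlim F (within (fun v => xinf < v <= x0) (locally u)) (locally (F u)))
  (G0 : y - (x - u0)/alpha - F u0 <= 0) (G1 : 0 < y - (x - x0)/alpha - F x0) :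
  exists u, u0 <= u < x0 /\ y - (x - u)/alpha - F u = 0.
Proof.
  set (g := fun v => y - (x - Rmax u0 (Rmin v x0))/alpha - F (Rmax u0 (Rmin v x0))).
  assert (Hc : continuity g).
  { intros v. unfold g.
    apply continuity_pt_minus.
    - apply continuity_pt_minus. apply continuity_pt_const; intros ? ?; reflexivity.
      unfold Rdiv. apply continuity_pt_mult. 2: apply continuity_pt_const; intros ? ?; reflexivity.
      apply continuity_pt_minus. apply continuity_pt_const; intros ? ?; reflexivity.
      apply (clamp_cont (fun w => w) u0 x0 xinf); try lra.
      intros w Hw P [eps Heps]. exists eps. intros; apply Heps; auto.
    - apply (clamp_cont F u0 x0 xinf); try lra; auto. }
  assert (gu0 : g u0 = y - (x - u0)/alpha - F u0).
  { unfold g. replace (Rmax u0 (Rmin u0 x0)) with u0; auto.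
    unfold Rmax, Rmin; repeat destruct Rle_dec; lra. }
  assert (gx0 : g x0 = y - (x - x0)/alpha - F x0).
  { unfold g. replace (Rmax u0 (Rmin x0 x0)) with x0; auto.
    unfold Rmax, Rmin; repeat destruct Rle_dec; lra. }
  destruct (IVT_gen g u0 x0 0 Hc) as [u [Hu Hgu]].
  { rewrite gu0, gx0. unfold Rmin, Rmax; repeat destruct Rle_dec; lra. }
  assert (u0 < x0).
  { destruct (Req_dec u0 x0); [subst; lra|lra]. }
  rewrite Rmin_left in Hu by lra. rewrite Rmax_right in Hu by lra.
  exists u. assert (E: Rmax u0 (Rmin u x0) = u).
  { unfold Rmax, Rmin; repeat destruct Rle_dec; lra. }
  unfold g in Hgu; rewrite E in Hgu. split; auto.
  split; try lra. destruct (Req_dec u x0); [subst; lra|lra].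
Qed.

Lemma uniq_sol (F : R -> R) (xinf x0 alpha x y z1 z2 : R) (Hal : 0 < alpha)
  (hFdec : forall u v, xinf < u -> u < v -> v <= x0 -> F v < F u)
  (H1 : xinf < x - alpha * z1 <= x0 /\ y - z1 = F (x - alpha * z1))
  (H2 : xinf < x - alpha * z2 <= x0 /\ y - z2 = F (x - alpha * z2)) : z1 = z2.
Proof.
  destruct H1 as [D1 E1]; destruct H2 as [D2 E2].
  destruct (Rtotal_order z1 z2) as [L|[L|L]]; auto.
  - assert (F (x - alpha * z1) < F (x - alpha * z2)) by (apply hFdec; nra). lra.
  - assert (F (x - alpha * z2) < F (x - alpha * z1)) by (apply hFdec; nra). lra.
Qed.

Theorem lemma4p9 (a b sigma rho c alpha x0 xinf : R)
  (hb : 0 < b) (hsigma : 0 < sigma) (hrho : 0 < rho) (hc : 0 < c) (halpha : 0 < alpha)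
  (* x0 : the unique solution on (c, oo) of (x - c) psi'(x) - psi(x) = 0 *)
  (hx0 : c < x0 /\ (x0 - c) * dpsi a b sigma rho 1 x0 - dpsi a b sigma rho 0 x0 = 0)
  (hx0u : forall x, c < x ->
     (x - c) * dpsi a b sigma rho 1 x - dpsi a b sigma rho 0 x = 0 -> x = x0)
  (* x_inf : the unique solution on (c, oo) of (x - c) psi''(x) - psi'(x) = 0 *)
  (hxi : c < xinf /\ (xinf - c) * dpsi a b sigma rho 2 xinf - dpsi a b sigma rho 1 xinf = 0)
  (hxiu : forall x, c < x ->
     (x - c) * dpsi a b sigma rho 2 x - dpsi a b sigma rho 1 x = 0 -> x = xinf)
  (hord : c < xinf < x0)
  (* F is a strictly decreasing continuous bijection of (x_inf, x0] onto [0, oo) *)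
  (hFdec : forall u v, xinf < u -> u < v -> v <= x0 ->
     Ffun a b sigma rho c alpha x0 v < Ffun a b sigma rho c alpha x0 u)
  (hFcont : forall u, xinf < u <= x0 ->
     filterlim (Ffun a b sigma rho c alpha x0)
       (within (fun v => xinf < v <= x0) (locally u))
       (locally (Ffun a b sigma rho c alpha x0 u)))
  (hFrange : forall u, xinf < u <= x0 -> 0 <= Ffun a b sigma rho c alpha x0 u)
  (hFonto : forall y, 0 <= y -> exists u, xinf < u <= x0 /\ Ffun a b sigma rho c alpha x0 u = y) :
  (forall x y, inS2 a b sigma rho c alpha xinf x0 x y ->
     exists z, solves a b sigma rho c alpha xinf x0 x y z /\
       (forall z', solves a b sigma rho c alpha xinf x0 x y z' -> z' = z) /\
       (x - x0) / alpha < z /\ z <= Rmin ((x - xinf) / alpha) y) /\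
  (forall x, xinf < x < x0 ->
     solves a b sigma rho c alpha xinf x0 x (Ffun a b sigma rho c alpha x0 x) 0 /\
     (forall z, solves a b sigma rho c alpha xinf x0 x (Ffun a b sigma rho c alpha x0 x) z -> z = 0)) /\
  (forall x y, 0 < y -> x0 <= x -> y = (x - x0) / alpha ->
     solves a b sigma rho c alpha xinf x0 x y ((x - x0) / alpha) /\
     (forall z, solves a b sigma rho c alpha xinf x0 x y z -> z = (x - x0) / alpha)).
Proof.
  unfold solves, inS2.
  set (F := Ffun a b sigma rho c alpha x0) in *.
  assert (F0 : F x0 = 0) by (unfold F, Ffun; exact (RInt_point x0 (Theta a b sigma rho c alpha))).
  assert (U := fun x y z1 z2 => uniq_sol F xinf x0 alpha x y z1 z2 halpha hFdec).
  split; [|split].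
  - intros x y [hy [hfi hy2]].
    set (u0 := Finv a b sigma rho c alpha xinf x0 y) in *.
    assert (Hu0 : xinf < u0 <= x0 /\ F u0 = y).
    { unfold u0, Finv. apply epsilon_spec. apply hFonto. lra. }
    destruct Hu0 as [Hu0 Fu0].
    destruct (exists_root F xinf x0 u0 x y alpha halpha Hu0 hFcont) as [u [Hu Gu]].
    { rewrite Fu0. unfold Rdiv. assert (0 <= (x - u0) * / alpha) by (apply Rmult_le_pos; [lra| left; apply Rinv_0_lt_compat; lra]). lra. }
    { rewrite F0. lra. }
    assert (Hsol : xinf < x - alpha * ((x - u)/alpha) <= x0 /\
                   y - (x - u)/alpha = F (x - alpha * ((x - u)/alpha))).
    { replace (x - alpha * ((x - u)/alpha)) with u by (field; lra). split; lra. }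
    exists ((x - u)/alpha). split; [exact Hsol|split].
    + intros z' Hz'. exact (U _ _ _ _ Hz' Hsol).
    + assert (0 <= F u) by (apply hFrange; lra).
      split.
      * apply Rmult_lt_compat_r. apply Rinv_0_lt_compat; lra. lra.
      * apply Rmin_glb. apply Rmult_le_compat_r. left; apply Rinv_0_lt_compat; lra. lra. lra.
  - intros x Hx.
    assert (Hsol : xinf < x - alpha * 0 <= x0 /\ F x - 0 = F (x - alpha * 0)).
    { replace (x - alpha * 0) with x by ring. split; lra. }
    split; [exact Hsol|]. intros z Hz. exact (U _ _ _ _ Hz Hsol).
  - intros x y hy hx hyx.
    assert (Hsol : xinf < x - alpha * ((x - x0)/alpha) <= x0 /\
                   y - (x - x0)/alpha = F (x - alpha * ((x - x0)/alpha))).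
    { replace (x - alpha * ((x - x0)/alpha)) with x0 by (field; lra). split; lra. }
    split; [exact Hsol|]. intros z Hz. exact (U _ _ _ _ Hz Hsol).
Qed.
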